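(* Let $T=(T_1,\dots,T_m)$ be algebraically independent over $F$, let $g\in F[T]$ be irreducible, and put $F[g]=\mathrm{Frac}(F[T]/(g))$. Let $\phi$ be a quasilinear $p$-form over $F$ and $f\in F[T]$ with $f\in D(\phi_{F(T)})$. If $\phi_{F[g]}$ is anisotropic, then $\mathrm{mult}_g(f)\equiv0\pmod p$.
   Context: Let $p$ be a prime and $F$ a field of characteristic $p$. A quasilinear $p$-form over a field $K$ of char. $p$ is a map $\phi\colon V\to K$ on a nonzero finite-dimensional $K$-vector space, homogeneous of degree $p$ and additive; $D(\phi)$ is its value set; $\phi_K$ the scalar extension; anisotropic means $\phi(v)\ne0$ for all $v\ne0$. $\mathrm{mult}_g(f)$ is the largest $s\ge0$ with $f=g^sh$ for some $h\in F[T]$ (with $\mathrm{mult}_g(0)=+\infty$). *)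

(* Defs.v *)
From HB Require Import structures.
From mathcomp Require Import all_boot all_order all_algebra.
Set Implicit Arguments. Unset Strict Implicit. Unset Printing Implicit Defensive.
Import GRing.Theory.
Local Open Scope ring_scope.

(* The polynomial ring F[T_1,...,T_m] in m algebraically independent
   variables, realised as the iterated univariate polynomial ring. *)
Fixpoint mpoly (F : idomainType) (m : nat) : idomainType :=
  match m with
  | O => F
  | S m' => [the idomainType of {poly (mpoly F m')}]
  end.

Fixpoint mconst (F : idomainType) (m : nat) : F -> mpoly F m :=
  match m return F -> mpoly F m with
  | O => fun c => c
  | S m' => fun c => polyC (mconst m' c)
  end.

Definition rdvd (R : idomainType) (a b : R) : Prop := exists h : R, b = a * h.

Definition irreducible_elt (R : idomainType) (g : R) : Prop :=
  g != 0 /\ g \isn't a GRing.unit /\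
  (forall a b : R, g = a * b -> a \is a GRing.unit \/ b \is a GRing.unit).

Definition is_mult (R : idomainType) (g f : R) (s : nat) : Prop :=
  rdvd (g ^+ s) f /\ ~ rdvd (g ^+ s.+1) f.

(* mult_g(f) == 0 mod p  (for f = 0, mult_g(f) = +oo and no finite s is the
   multiplicity, so the condition holds vacuously). *)
Definition mult_cong0 (R : idomainType) (g f : R) (p : nat) : Prop :=
  forall s : nat, is_mult g f s -> (p %| s)%N.

Definition quasilinear_pform (F : fieldType) (V : vectType F) (p : nat)
  (phi : V -> F) : Prop :=
  (0 < \dim (fullv : {vspace V}))%N /\
  (forall x y : V, phi (x + y) = phi x + phi y) /\
  (forall (a : F) (x : V), phi (a *: x) = a ^+ p * phi x).

(* Scalar extension phi_K to V (x)_F K, along a field embedding iota : F -> K.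
   An element of V (x) K is written sum_i c_i (x) b_i in the basis
   b = vbasis fullv of V, and phi_K(sum_i c_i (x) b_i) = sum_i c_i^p iota(phi b_i)
   (the unique additive, p-homogeneous extension). *)
Definition phi_ext (F : fieldType) (V : vectType F) (p : nat) (phi : V -> F)
  (K : fieldType) (iota : F -> K)
  (c : 'I_(\dim (fullv : {vspace V})) -> K) : K :=
  \sum_i c i ^+ p * iota (phi (tnth (vbasis fullv) i)).

Definition value_set (F : fieldType) (V : vectType F) (p : nat) (phi : V -> F)
  (K : fieldType) (iota : F -> K) (x : K) : Prop :=
  exists c, x = phi_ext p phi iota c.

Definition anisotropic_ext (F : fieldType) (V : vectType F) (p : nat)
  (phi : V -> F) (K : fieldType) (iota : F -> K) : Prop :=
  forall c, phi_ext p phi iota c = 0 -> forall i, c i = 0.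

(* Main.v *)
Require Import Defs.
From HB Require Import structures.
From mathcomp Require Import all_boot all_order all_algebra.
From mathcomp Require Import zify ring.
From Stdlib Require Import Classical.
Local Open Scope quotient_scope.
Import GRing.Theory.
Local Open Scope ring_scope.

Section Key.
Variables (R : idomainType) (L : fieldType) (psi : {rmorphism R -> L}) (g : R).
Hypothesis hker : forall a : R, psi a = 0 <-> rdvd g a.
Hypothesis g0 : g != 0.
Variables (p n : nat) (phi : 'I_n -> R).
Hypothesis p0 : (0 < p)%N.
Hypothesis aniso : forall c : 'I_n -> L, \sum_i c i ^+ p * psi (phi i) = 0 -> forall i, c i = 0.

Lemma gprime a b : rdvd g (a * b) -> rdvd g a \/ rdvd g b.
Proof.
move/hker; rewrite rmorphM => /eqP; rewrite mulf_eq0 => /orP[] /eqP /hker; by [left|right].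
Qed.

Lemma gprimeX a k : rdvd g (a ^+ k) -> rdvd g a.
Proof.
elim: k => [|k IH]; first by rewrite expr0 => /hker; rewrite rmorph1 => /eqP; rewrite oner_eq0.
by rewrite exprS => /gprime [|/IH].
Qed.

Lemma key N : forall s k u w (a : 'I_n -> R), (s + k < N)%N -> ~ rdvd g u -> ~ rdvd g w ->
  g ^+ s * u * (g ^+ k * w) ^+ p = \sum_i a i ^+ p * phi i -> (p %| s)%N.
Proof.
elim: N => [//|N IH] s k u w a hN hu hw E.
have [/existsP[i ai]|allz] := boolP [exists i, psi (a i) != 0].
  case: s hN E => [|s] hN E; first by rewrite dvdn0.
  exfalso.
  have psig : psi g = 0 by apply/hker; exists 1; rewrite mulr1.
  have := congr1 psi E.
  rewrite rmorph_sum; under eq_bigr => j _ do rewrite rmorphM rmorphXn.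
  rewrite !rmorphM !rmorphXn psig expr0n /= !mul0r => /esym Hs'.
  by move: (aniso (fun j => psi (a j)) Hs' i) => /eqP; rewrite (negbTE ai).
have H i : exists b, a i == g * b.
  have : psi (a i) = 0 by apply/eqP; move/existsPn: allz => /(_ i); rewrite negbK.
  by case/hker => b ->; exists b.
pose b i := xchoose (H i).
have Eb : \sum_i a i ^+ p * phi i = g ^+ p * \sum_i b i ^+ p * phi i.
  rewrite mulr_sumr; apply: eq_bigr => i _.
  by rewrite (eqP (xchooseP (H i))) exprMn mulrA.
have gp0 : g ^+ p != 0 by rewrite expf_neq0.
case: k hN E => [|k] hN E.
  rewrite expr0 mul1r in E.
  have [sp|ps] := ltnP s p.
    exfalso.
    have E2 : g ^+ s * (u * w ^+ p) = g ^+ s * (g ^+ (p - s) * \sum_i b i ^+ p * phi i).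
      by rewrite mulrA E Eb mulrA -exprD subnKC // ltnW.
    have gs0 : g ^+ s != 0 by rewrite expf_neq0.
    have E3 := mulfI gs0 E2.
    have : rdvd g (u * w ^+ p).
      exists (g ^+ (p - s).-1 * \sum_i b i ^+ p * phi i).
      by rewrite E3 mulrA -exprS prednK // subn_gt0.
    by case/gprime => // /gprimeX.
  have E2 : g ^+ p * (g ^+ (s - p) * u * w ^+ p) = g ^+ p * \sum_i b i ^+ p * phi i.
    by rewrite -Eb -E !mulrA -exprD subnKC.
  have Hlt : (s - p + 0 < N)%N by lia.
  have := IH (s - p)%N 0%N u w b Hlt hu hw.
  rewrite expr0 mul1r => /(_ (mulfI gp0 E2)) Hd.
  by rewrite -(subnK ps) dvdn_addl.
have E2 : g ^+ p * (g ^+ s * u * (g ^+ k * w) ^+ p) = g ^+ p * \sum_i b i ^+ p * phi i.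
  rewrite -Eb -E [in RHS]exprS -[in RHS]mulrA [in RHS]exprMn.
  rewrite !exprMn; set A := g ^+ p; set B := g ^+ s; set C := (g ^+ k) ^+ p; set D := w ^+ p; ring.
apply: (IH s k u w b _ hu hw (mulfI gp0 E2)); lia.
Qed.
End Key.
Definition finmult (R : idomainType) := forall g x : R, x != 0 ->
  g \isn't a GRing.unit -> exists n, ~ rdvd (g ^+ n) x.

Lemma finmult_poly (R : idomainType) : finmult R -> finmult {poly R}.
Proof.
move=> IH g x x0 gu.
have [sg|sg] := leqP (size g) 1%N.
  have gE := size1_polyC sg.
  have g0u : g`_0 \isn't a GRing.unit.
    apply: contra gu => u; rewrite poly_unitE u andbT gE size_polyC.
    suff -> : g`_0 != 0 by [].
    by apply: contraTneq u => ->; rewrite unitr0.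
  have lx : lead_coef x != 0 by rewrite lead_coef_eq0.
  have [n hn] := IH _ _ lx g0u.
  exists n => -[h hE]; apply: hn; exists h`_(size x).-1.
  rewrite /lead_coef {1}hE; move: gE; set c := g`_0 => gE.
  by rewrite gE -(rmorphXn (@polyC R)) coefCM.
exists (size x) => -[h hE].
have h0 : h != 0 by apply: contraNneq x0 => h0; rewrite hE h0 mulr0.
have gn0 : g ^+ size x != 0.
  by apply: expf_neq0; rewrite -size_poly_gt0; lia.
have E1 : (size (g ^+ size x)).-1 = ((size g).-1 * size x)%N := size_exp g (size x).
have E2 : size x = (size (g ^+ size x) + size h).-1 :=
  etrans (f_equal (fun q : {poly R} => size q) hE) (size_mul gn0 h0).
have E3 : (0 < size (g ^+ size x))%N by rewrite size_poly_gt0.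
have E4 : (0 < size h)%N by rewrite size_poly_gt0.
have : (size x <= (size g).-1 * size x)%N by rewrite leq_pmull //; lia.
lia.
Qed.
Lemma frac_repr (R : idomainType) (x : {fraction R}) :
  exists a d : R, d != 0 /\ x * FracField.tofrac d = FracField.tofrac a.
Proof.
elim/quotW: x => r.
exists (r.1), (r.2); split; first exact: denom_ratioP.
rewrite /FracField.tofrac.
rewrite -!lock.
rewrite -[_ * _]FracField.pi_mul.
apply/eqmodP; rewrite /= FracField.equivfE.
rewrite /FracField.mulf !numden_Ratio ?oner_neq0 ?mulf_neq0 ?denom_ratioP ?oner_neq0 //.
by rewrite !mulr1 mulrC.
Qed.

Lemma finmult_field (F : fieldType) : finmult F.
Proof.
move=> g x x0; rewrite unitfE negbK => /eqP ->.
exists 1%N => -[h]; rewrite expr1 mul0r => /eqP; by rewrite (negbTE x0).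
Qed.

Lemma finmult_mpoly (F : fieldType) m : finmult (mpoly F m).
Proof. elim: m => [|m IH]; [exact: finmult_field | exact: finmult_poly IH]. Qed.

Lemma exact_pow (R : idomainType) (g : R) n0 : forall x,
  ~ rdvd (g ^+ n0) x -> exists k w, x = g ^+ k * w /\ ~ rdvd g w.
Proof.
elim: n0 => [|n IH] x hx.
  by exfalso; apply: hx; exists x; rewrite expr0 mul1r.
have [[w wE]|nd] := classic (rdvd (g ^+ n) x); last exact: IH.
exists n, w; split => // -[v vE]; apply: hx; exists v.
by rewrite wE vE exprSr mulrA.
Qed.

Theorem mainTheorem14 (p : nat) (F : fieldType) (hp : prime p)
  (hchar : p \in [pchar F]) (m : nat)
  (g f : mpoly F m) (hg : irreducible_elt g)
  (V : vectType F) (phi : V -> F) (hphi : quasilinear_pform p phi)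
  (hf : value_set p phi (fun c : F => FracField.tofrac (mconst m c))
          (FracField.tofrac f))
  (L : fieldType) (psi : {rmorphism mpoly F m -> L})
  (hker : forall a : mpoly F m, psi a = 0 <-> rdvd g a)
  (hgen : forall x : L, exists a b : mpoly F m, psi b != 0 /\ x = psi a / psi b)
  (haniso : anisotropic_ext p phi (fun c : F => psi (mconst m c))) :
  mult_cong0 g f p.
Proof.
move=> s [[u fE] nf].
have hu : ~ rdvd g u.
  by case=> v vE; apply: nf; exists v; rewrite fE vE exprSr mulrA.
case: hg => g0 [gu _].
case: hf => c cE.
set n := \dim (fullv : {vspace V}) in c cE haniso *.
pose ph (i : 'I_n) := mconst m (phi (tnth (vbasis fullv) i)).
have H i : exists q : mpoly F m * mpoly F m, (q.2 != 0) && (c i * FracField.tofrac q.2 == FracField.tofrac q.1).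
  have [x [y [y0 E]]] := frac_repr _ (c i).
  by exists (x, y); rewrite y0 E eqxx.
pose q i := xchoose (H i).
have qP i : (q i).2 != 0 /\ c i * FracField.tofrac (q i).2 = FracField.tofrac (q i).1.
  by have /andP[? /eqP ?] := xchooseP (H i).
pose d : mpoly F m := \prod_i (q i).2.
pose a i : mpoly F m := (q i).1 * \prod_(j | j != i) (q j).2.
have d0 : d != 0 by apply/prodf_neq0 => i _; case: (qP i).
have ca i : c i * FracField.tofrac d = FracField.tofrac (a i).
  rewrite /d (bigD1 i) //= rmorphM mulrA (proj2 (qP i)) /a rmorphM.
  by rewrite rmorph_prod.
have E : f * d ^+ p = \sum_i a i ^+ p * ph i.
  apply/eqP; rewrite -tofrac_eq rmorphM rmorphXn /= cE /phi_ext mulr_suml rmorph_sum.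
  apply/eqP; apply: eq_bigr => i _.
  by rewrite /= rmorphM rmorphXn /= -ca exprMn mulrAC.
have [n0 hn0] := finmult_mpoly _ _ _ _ d0 gu.
have [k [w [dE hw]]] := exact_pow _ _ _ _ hn0.
apply: (@key _ _ psi g hker g0 p n ph (prime_gt0 hp) haniso (s + k).+1 s k u w a) => //.
by rewrite -fE -dE.
Qed.
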